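(* For each $n$, let $K=K(n)$ be a kernel, $k=k(n)\in\mathbb N$, $e=e(n)\in E(K)$, and let $C=C(K,k)$ be a uniformly random core with kernel $K$ and $|V(K)|+k$ vertices. If $|E(K)|=o(k)$, then the subdivision number $s_C(e)$ tends to infinity in probability, i.e. for each fixed $j\in\mathbb N_0$, $\Pr[s_C(e)\le j]\to0$.
   Context: A kernel is a multigraph (loops and multiple edges allowed) of minimum degree at least three; a core is a graph of minimum degree at least two. The kernel of a core is obtained by replacing every maximal path whose internal vertices all have degree two by an edge between its endpoints; conversely a core with kernel $K$ arises from $K$ by subdividing its edges. $C(K,k)$ is chosen uniformly from all cores (on a labelled vertex set containing $V(K)$, with $k$ additional vertices) whose kernel is $K$. For an edge $e\in E(K)$, the subdivision number $s_C(e)$ is the number of vertices by which $e$ is subdivided to obtain $C$. *)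

(* Defs.v *)
From HB Require Import structures.
From mathcomp Require Import all_boot all_order all_algebra.
From mathcomp Require Import all_classical all_reals all_analysis.
Unset Strict Implicit. Unset Printing Implicit Defensive.
Import Order.TTheory GRing.Theory Num.Theory.

(* A (labelled) multigraph: vertices 'I_kv, edges 'I_ke, each edge with an
   ordered pair of endpoints (the order only fixes an orientation used to
   record the order of subdivision vertices along the edge). Loops and
   multiple edges are allowed. *)
Record multigraph := MultiGraph {
  kv : nat;
  ke : nat;
  kends : {ffun 'I_ke -> 'I_kv * 'I_kv} }.

Definition kdeg (K : multigraph) (v : 'I_(kv K)) : nat :=
  \sum_(i < ke K) (((kends K i).1 == v) + ((kends K i).2 == v))%N.

Definition is_kernel (K : multigraph) : Prop :=
  forall v : 'I_(kv K), (3 <= kdeg K v)%N.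

Definition is_loop (K : multigraph) (i : 'I_(ke K)) : bool :=
  (kends K i).1 == (kends K i).2.

Definition parallel (K : multigraph) (i i' : 'I_(ke K)) : bool :=
  (kends K i == kends K i') ||
  (kends K i == ((kends K i').2, (kends K i').1)).

(* Subdivision data: the j-th extra vertex (j : 'I_k) is put on edge
   (f j).1 at position (f j).2 (counted from the first endpoint). *)
Definition subdiv (K : multigraph) (k : nat) := {ffun 'I_k -> 'I_(ke K) * 'I_k}.

Definition snum (K : multigraph) (k : nat) (f : subdiv K k) (i : 'I_(ke K)) : nat :=
  #|[set v | (f v).1 == i]|.

(* f encodes a genuine subdivision (positions on each edge are exactly
   0, ..., s(i)-1) and the resulting graph is simple, i.e. a core with
   kernel K on vertex set V(K) + k extra vertices. *)
Definition valid_subdiv (K : multigraph) (k : nat) (f : subdiv K k) : bool :=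
  [&& injectiveb f,
      [forall v, ((f v).2 < snum K k f (f v).1)%N],
      [forall i, is_loop K i ==> (2 <= snum K k f i)%N] &
      [forall i, forall i', ((i != i') && parallel K i i') ==>
                            ((0 < snum K k f i) || (0 < snum K k f i'))%N]].

Definition core_prob (R : realType) (K : multigraph) (k : nat)
    (e : 'I_(ke K)) (j : nat) : R :=
  (#|[set f : subdiv K k | valid_subdiv K k f && (snum K k f e <= j)%N]|%:R /
   #|[set f : subdiv K k | valid_subdiv K k f]|%:R)%R.

(* Main.v *)
Require Import Defs.
From HB Require Import structures.
From mathcomp Require Import all_boot all_order all_algebra.
From mathcomp Require Import all_classical all_reals all_analysis.
From mathcomp Require Import zify.
Import Order.TTheory GRing.Theory Num.Theory.

Lemma card_predE (T : finType) (P : pred T) :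
  #|[set x | P x]| = (\sum_x (P x : nat))%N.
Proof.
rewrite -sum1_card big_mkcond /=; apply: eq_bigr => x _; rewrite inE.
by case: (P x).
Qed.

Lemma sum_ord_lt k n : (\sum_(p < k) ((p : nat) < n) : nat)%N = minn k n.
Proof.
elim: k => [|k IH]; first by rewrite big_ord0 min0n.
rewrite big_ord_recr /= IH.
case: (ltnP k n) => h; lia.
Qed.

Lemma sum_eq_pointwise (I : finType) (a b : I -> nat) i :
  (forall x, a x <= b x)%N -> (\sum_x a x = \sum_x b x)%N -> a i = b i.
Proof.
move=> le sumeq.
rewrite (bigD1 i) //= [X in _ = X](bigD1 i) //= in sumeq.
have : (\sum_(x | x != i) a x <= \sum_(x | x != i) b x)%N by apply: leq_sum => x _; exact: le.
move: (le i) sumeq; lia.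
Qed.

Section Comb.
Variables (K : multigraph) (k : nat).
Notation m := (ke K).
Definition comp := {ffun 'I_m -> 'I_k.+1}.

Definition constr (s : 'I_m -> nat) : bool :=
  [forall i, is_loop K i ==> (2 <= s i)%N] &&
  [forall i, forall i', ((i != i') && parallel K i i') ==> ((0 < s i) || (0 < s i'))%N].

Definition validc (s : comp) : bool :=
  ((\sum_i (s i : nat))%N == k) && constr (fun i => s i).

Lemma snum_le (f : subdiv K k) i : (snum K k f i <= k)%N.
Proof. by rewrite /snum; apply: leq_trans (max_card _) _; rewrite card_ord. Qed.

Definition sv (f : subdiv K k) : comp := [ffun i => inord (snum K k f i)].

Lemma sv_val f i : (sv f i : nat) = snum K k f i.
Proof. by rewrite ffunE inordK // ltnS snum_le. Qed.

Lemma sum_snum f : (\sum_i snum K k f i)%N = k.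
Proof.
rewrite /snum.
under eq_bigr do rewrite card_predE.
rewrite exchange_big /=.
rewrite -[RHS](card_ord k) -sum1_card; apply: eq_bigr => v _.
rewrite (bigD1 (f v).1) //= eqxx big1 // => j /negbTE.
by rewrite eq_sym => ->.
Qed.

Lemma valid_validc f : valid_subdiv K k f -> validc (sv f).
Proof.
case/and4P=> _ _ hl hp; apply/andP; split.
  by under eq_bigr do rewrite sv_val; rewrite sum_snum.
apply/andP; split.
  apply/forallP => i; rewrite sv_val; exact: (forallP hl i).
apply/forallP => i; apply/forallP => i'; rewrite !sv_val.
exact: (forallP (forallP hp i) i').
Qed.

Definition Ps (s : comp) : pred ('I_m * 'I_k) := fun x => (x.2 < s x.1)%N.

Lemma card_Ps s : validc s -> #|Ps s| = k.
Proof.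
case/andP => /eqP hs _.
rewrite -sum1_card big_mkcond /=.
rewrite -(pair_big predT predT (fun i (p : 'I_k) => if (p < s i)%N then 1 else 0)%N) /=.
rewrite -[RHS]hs; apply: eq_bigr => i _.
transitivity (\sum_(p < k) ((p : nat) < s i) : nat)%N.
  by apply: eq_bigr => p _; case: ltnP.
rewrite sum_ord_lt; apply/minn_idPr; rewrite -ltnS; exact: ltn_ord.
Qed.

Lemma fiber_eq s : validc s ->
  [set f : subdiv K k | valid_subdiv K k f && (sv f == s)] =
  [set f : subdiv K k in ffun_on (Ps s) | injectiveb f].
Proof.
move=> vs; apply/setP => f; rewrite !inE.
apply/idP/idP.
  case/andP => /and4P [inj hpos _ _] /eqP <-.
  rewrite inj andbT; apply/ffun_onP => v.
  by rewrite /Ps /in_mem /= sv_val; exact: (forallP hpos v).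
case/andP => /ffun_onP hon inj.
have le : forall i, (snum K k f i <= s i)%N.
  move=> i; rewrite /snum.
  have -> : (s i : nat) = #|[set p : 'I_k | (p < s i)%N]|.
    rewrite card_predE sum_ord_lt; apply/esym/minn_idPr.
    by rewrite -ltnS; exact: ltn_ord.
  rewrite -(card_in_imset (f := fun v => (f v).2)).
    apply/subset_leq_card/fintype.subsetP => p /imsetP [v].
    rewrite !inE => /eqP hv ->; have := hon v; rewrite /Ps /in_mem /=.
    by rewrite hv.
  move=> v w; rewrite !inE => /eqP hv /eqP hw h.
  apply: (injectiveP _ inj).
  by case: (f v) hv h => a b; case: (f w) hw => c d /= -> -> ->.
have eqs : forall i, snum K k f i = s i.
  move=> i; apply: (@sum_eq_pointwise _ (snum K k f) (fun i => (s i : nat)) i le).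
  by rewrite sum_snum; case/andP: vs => /eqP ->.
have -> : sv f == s.
  by apply/eqP/ffunP => i; apply: val_inj; rewrite /= sv_val eqs.
rewrite andbT; case/andP: vs => _ /andP [hl hp].
apply/and4P; split => //.
- apply/forallP => v; rewrite eqs; exact: hon.
- apply/forallP => i; rewrite eqs; exact: (forallP hl i).
- apply/forallP => i; apply/forallP => i'; rewrite !eqs.
  exact: (forallP (forallP hp i) i').
Qed.

Lemma card_fiber s :
  #|[set f : subdiv K k | valid_subdiv K k f && (sv f == s)]| = (validc s * k`!)%N.
Proof.
case vs: (validc s).
  by rewrite fiber_eq // card_inj_ffuns_on card_Ps // card_ord ffactnn mul1n.
rewrite mul0n; apply/eqP; rewrite cards_eq0; apply/eqP/setP => f.
rewrite !inE; apply/negbTE; apply/negP => /andP [v /eqP e].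
by move: (valid_validc f v); rewrite e vs.
Qed.

Lemma core_count (e : 'I_m) (P : pred nat) :
  #|[set f : subdiv K k | valid_subdiv K k f && P (snum K k f e)]| =
  (k`! * #|[set s : comp | validc s && P (s e)]|)%N.
Proof.
rewrite !card_predE (partition_big sv predT) //=.
rewrite big_distrr /=; apply: eq_bigr => s _.
transitivity (P (s e) * #|[set f : subdiv K k | valid_subdiv K k f && (sv f == s)]|)%N.
  rewrite card_predE big_distrr /= big_mkcond /=; apply: eq_bigr => f _.
  case: eqP => [<-|]; last by case: (valid_subdiv _ _ _); rewrite ?andbF muln0.
  by rewrite sv_val; case: (valid_subdiv _ _ _); case: (P _).
by rewrite card_fiber; case: (validc s); case: (P _); rewrite /= ?mul1n ?mul0n ?muln0 ?muln1.
Qed.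
End Comb.
Arguments validc {K k} s.
Section Step.
Variables (K : multigraph) (k : nat) (e : 'I_(ke K)).
Notation m := (ke K).

Definition Cs (t : nat) := [set s : comp K k | validc s && ((s e : nat) == t)].

Definition move (i : 'I_m) (s : comp K k) : comp K k :=
  [ffun x => if x == i then inord (s x).-1 else if x == e then inord (s x).+1 else s x].

Lemma sum_two (s : comp K k) i : i != e -> ((s i : nat) + s e <= \sum_x (s x : nat))%N.
Proof.
move=> ie; rewrite (bigD1 i) //= (bigD1 e) /=; first lia.
by rewrite eq_sym ie.
Qed.

Lemma move_val i (s : comp K k) x : i != e -> (s e < k)%N ->
  (move i s x : nat) = if x == i then (s x).-1 else if x == e then (s x).+1 else s x.
Proof.
move=> ie lt; rewrite ffunE; case: eqP => [->|_].
  by rewrite inordK // ltnS; apply: leq_trans (leq_pred _) _; rewrite -ltnS.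
case: eqP => [->|_] //; by rewrite inordK.
Qed.

Lemma constr_mono (a b : 'I_m -> nat) :
  (forall x, (a x <= b x)%N \/ (2 <= b x)%N) -> constr K a -> constr K b.
Proof.
move=> H /andP [hl hp].
have H2 : forall x, (2 <= a x)%N -> (2 <= b x)%N.
  by move=> x; case: (H x) => h; lia.
have H0 : forall x, (0 < a x)%N -> (0 < b x)%N.
  by move=> x; case: (H x) => h; lia.
apply/andP; split.
  apply/forallP => i; apply/implyP => li; apply: H2.
  exact: (implyP (forallP hl i) li).
apply/forallP => i; apply/forallP => i'; apply/implyP => c.
have := implyP (forallP (forallP hp i) i') c.
by case/orP => [/H0 -> // | /H0 ->]; rewrite orbT.
Qed.

Lemma move_prop t i (s : comp K k) : i != e -> s \in Cs t -> (3 <= s i)%N ->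
  (move i s \in Cs t.+1) /\ ((move i s i : nat) = (s i).-1).
Proof.
move=> ie; rewrite inE => /andP [/andP [/eqP hs hc] /eqP het] h3.
have lt : (s e < k)%N by have := sum_two s i ie; lia.
have mv x := move_val i s x ie lt.
split; last by rewrite mv eqxx.
have ei : (e == i) = false by rewrite eq_sym; exact: negbTE.
rewrite inE; apply/andP; split; last by rewrite mv ei eqxx het.
apply/andP; split.
  apply/eqP.
  have one : forall y : 'I_m, (\sum_x ((x == y) : nat))%N = 1%N.
    move=> y; rewrite (bigD1 y) //= eqxx big1 // => z /negbTE ->; done.
  have : (\sum_x ((move i s x : nat) + (x == i)) = \sum_x ((s x : nat) + (x == e)))%N.
    apply: eq_bigr => x _; rewrite mv; case: eqP => [->|xi].
      rewrite (negbTE ie); lia.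
    case: eqP => [->|xe] /=; lia.
  rewrite !big_split /= !one => /addIn ->; exact: hs.
apply: (@constr_mono (fun x => (s x : nat))) => //.
move=> x; rewrite mv; case: eqP => [->|_]; first by right; lia.
case: eqP => _; left; lia.
Qed.

End Step.
Arguments Cs {K k} e t.
Arguments move {K k} e i s.
Arguments sum_two {K k} e s i.
Arguments move_val {K k e} i s x.
Arguments move_prop {K k e} t i s.
Lemma sum_subset_le (T : finType) (A B : {set T}) (F : T -> nat) :
  A \subset B -> (\sum_(x in A) F x <= \sum_(x in B) F x)%N.
Proof.
move=> sub; rewrite [X in (_ <= X)%N](big_setID A) /= (finset.setIidPr sub).
exact: leq_addr.
Qed.

Section Step2.
Variables (K : multigraph) (k : nat) (e : 'I_(ke K)).
Notation m := (ke K).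
Local Notation C t := (@Cs K k e t).

Lemma lt_of t i (s : comp K k) : i != e -> validc s && ((s e : nat) == t) -> (3 <= s i)%N -> (s e < k)%N.
Proof.
move=> ie /andP [/andP [/eqP hs _] _] h3.
have := sum_two e s i ie; lia.
Qed.

Lemma move_inj t i : i != e ->
  {in [set s in C t | (3 <= s i)%N] &, injective (move e i)}.
Proof.
move=> ie s1 s2; rewrite !inE => /andP [c1 h1] /andP [c2 h2] h.
have l1 := lt_of _ _ _ ie c1 h1; have l2 := lt_of _ _ _ ie c2 h2.
apply/ffunP => x; apply: val_inj => /=.
have := congr1 (fun s : comp K k => (s x : nat)) h => /=.
rewrite (move_val i s1 x ie l1) (move_val i s2 x ie l2).
case: eqP => [->|_].
  move=> hh; rewrite -(prednK (leq_trans (isT : (0 < 3)%N) h1)).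
  by rewrite -(prednK (leq_trans (isT : (0 < 3)%N) h2)) hh.
by case: eqP => _ // [].
Qed.

Lemma wsum t i : i != e ->
  (\sum_(s in C t) ((s i : nat) - 2) <= \sum_(s in C t.+1) ((s i : nat) - 1))%N.
Proof.
move=> ie.
rewrite (bigID (fun s : comp K k => (3 <= s i)%N)) /=.
rewrite [X in (_ + X)%N]big1 ?addn0; last by move=> s /andP [_]; rewrite -ltnNge; lia.
set D := [set s in C t | (3 <= s i)%N].
have -> : (\sum_(s in C t | (3 <= s i)%N) ((s i : nat) - 2) =
           \sum_(s in D) ((move e i s i : nat) - 1))%N.
  apply: eq_big => s; first by rewrite /D !inE.
  move=> /andP [c h]; rewrite (proj2 (move_prop t i s ie c h)).
  by rewrite -subn1 -subnDA.
rewrite -(big_imset (fun s' : comp K k => (s' i : nat) - 1)%N (move_inj t i ie)).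
apply: sum_subset_le; apply/fintype.subsetP => s' /imsetP [s hs ->].
rewrite inE in hs; case/andP: hs => c h.
exact: (proj1 (move_prop t i s ie c h)).
Qed.
End Step2.
Section Step3.
Variables (K : multigraph) (k : nat) (e : 'I_(ke K)).
Notation m := (ke K).
Local Notation C t := (@Cs K k e t).

Lemma step t : ((k - t - 2 * m) * #|C t| <= k * #|C t.+1|)%N.
Proof.
have lower : forall s : comp K k, s \in C t ->
    (k - t - 2 * m <= \sum_(i | i != e) ((s i : nat) - 2))%N.
  move=> s; rewrite inE => /andP [/andP [/eqP hs _] /eqP het].
  have h1 : (\sum_(i | i != e) (s i : nat) <= \sum_(i | i != e) ((s i : nat) - 2) + 2 * m)%N.
    apply: (@leq_trans (\sum_(i | i != e) (((s i : nat) - 2) + 2))%N).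
      by apply: leq_sum => i _; rewrite addnC -leq_subLR.
    rewrite big_split /= leq_add2l.
    apply: (@leq_trans (\sum_(i < m) 2)%N); last by rewrite sum_nat_const card_ord mulnC.
    rewrite [X in (_ <= X)%N](bigD1 e) //=; exact: leq_addl.
  have h2 : (\sum_i (s i : nat) = s e + \sum_(i | i != e) (s i : nat))%N by rewrite (bigD1 e).
  move: h1 h2; rewrite hs het; lia.
rewrite mulnC -sum_nat_const.
apply: (@leq_trans (\sum_(s in C t) \sum_(i | i != e) ((s i : nat) - 2)))%N.
  by apply: leq_sum => s; apply: lower.
rewrite exchange_big /=.
apply: (@leq_trans (\sum_(i | i != e) \sum_(s in C t.+1) ((s i : nat) - 1)))%N.
  by apply: leq_sum => i ie; apply: wsum.
rewrite exchange_big /= mulnC -sum_nat_const.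
apply: leq_sum => s; rewrite inE => /andP [/andP [/eqP hs _] _].
rewrite -[X in (_ <= X)%N]hs.
apply: (@leq_trans (\sum_(i | i != e) (s i : nat)))%N.
  by apply: leq_sum => i _; exact: leq_subr.
rewrite [X in (_ <= X)%N](bigD1 e) //=; exact: leq_addl.
Qed.
End Step3.
Lemma leq_expr (a b d : nat) : (a <= b)%N -> (a ^ d <= b ^ d)%N.
Proof.
move=> ab; elim: d => [|d IH]; first by rewrite !expn0.
by rewrite !expnS leq_mul.
Qed.

Lemma bern (k c d : nat) : (c <= k)%N ->
  (k ^ d.+1 <= k * (k - c) ^ d + d * c * k ^ d)%N.
Proof.
move=> ck; elim: d => [|d IH]; first by rewrite !expn0 expn1 !muln1 mul0n addn0.
have aP : ((k - c) ^ d <= k ^ d)%N by apply: leq_expr; exact: leq_subr.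
set a := ((k - c) ^ d)%N in aP IH *.
set P := (k ^ d)%N in aP IH *.
have -> : (k ^ d.+2 = k * k ^ d.+1)%N by rewrite expnS.
have -> : ((k - c) ^ d.+1 = (k - c) * a)%N by rewrite expnS.
have -> : (k ^ d.+1 = k * P)%N by rewrite expnS.
rewrite expnS in IH.
have h1 := leq_mul (leqnn k) IH.
have h2 := leq_mul (leqnn (k * c)) aP.
have e1 : (k = (k - c) + c)%N by rewrite subnK.
nia.
Qed.

Lemma bern2 (k c d : nat) : (0 < k)%N -> (2 * d * c <= k)%N ->
  (k ^ d <= 2 * (k - c) ^ d)%N.
Proof.
move=> k0 h.
case: d h => [|d] h; first by rewrite !expn0.
have ck : (c <= k)%N by apply: leq_trans h; nia.
have B := @bern k c d.+1 ck.
have h3 := leq_mul h (leqnn (k ^ d.+1)).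
rewrite expnS in B.
set a := ((k - c) ^ d.+1)%N in B *.
set P := (k ^ d.+1)%N in B h3 *.
rewrite -(leq_pmul2l k0).
nia.
Qed.
Lemma chain (N : nat -> nat) (k c T : nat) : (0 < k)%N -> (2 * T * c <= k)%N ->
  (forall t, (t < T)%N -> ((k - c) * N t <= k * N t.+1)%N) ->
  forall t d, (t + d <= T)%N -> (N t <= 2 * N (t + d))%N.
Proof.
move=> k0 hk hs t d td.
have pw : forall d', (t + d' <= T)%N -> ((k - c) ^ d' * N t <= k ^ d' * N (t + d'))%N.
  elim=> [|d' IH] h; first by rewrite !expn0 addn0.
  rewrite !expnS -!mulnA.
  apply: (@leq_trans ((k - c) * (k ^ d' * N (t + d'))))%N.
    by rewrite leq_mul2l IH ?orbT // ltnW // -addnS.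
  rewrite mulnCA [X in (_ <= X)%N]mulnCA leq_mul2l; apply/orP; right.
  by rewrite addnS; apply: hs; rewrite -addnS.
have b := @bern2 k c d k0 (leq_trans (leq_mul (leq_mul (leqnn 2) (leq_trans (leq_addl t d) td)) (leqnn c)) hk).
have kd : (0 < k ^ d)%N by rewrite expn_gt0 k0.
rewrite -(leq_pmul2l kd).
apply: (@leq_trans (2 * (k - c) ^ d * N t))%N.
  by rewrite leq_mul2r b orbT.
have := pw d td; nia.
Qed.

Lemma sum_eq_ind (n x : nat) : (\sum_(t < n) (x == t : nat))%N = (x < n)%N.
Proof.
elim: n => [|n IH]; first by rewrite big_ord0.
rewrite big_ord_recr /= IH ltnS leq_eqVlt.
by case: (ltngtP x n) => h; rewrite ?(eqP h) ?eqxx //=; lia.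
Qed.

Lemma card_split (T : finType) (P : pred T) (g : T -> nat) n :
  #|[set x | P x && (g x <= n)%N]| = (\sum_(t < n.+1) #|[set x | P x && (g x == t)]|)%N.
Proof.
rewrite card_predE; under [RHS]eq_bigr do rewrite card_predE.
rewrite exchange_big /=; apply: eq_bigr => x _.
case: (P x) => /=; last by rewrite big1.
by rewrite sum_eq_ind ltnS.
Qed.

Lemma ratio (N : nat -> nat) j T Bad Tot : (j < T)%N ->
  (forall t t', (t <= j)%N -> (j < t')%N -> (t' <= T)%N -> (N t <= 2 * N t')%N) ->
  Bad = (\sum_(t < j.+1) N t)%N -> (\sum_(t < T.+1) N t <= Tot)%N ->
  ((T - j) * Bad <= 2 * j.+1 * Tot)%N.
Proof.
move=> jT hN -> hT.
have one : forall t, (t <= j)%N -> ((T - j) * N t <= 2 * Tot)%N.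
  move=> t tj.
  have -> : (T - j = T.+1 - j.+1)%N by rewrite subSS.
  rewrite -sum_nat_const_nat.
  apply: (@leq_trans (\sum_(j.+1 <= t' < T.+1) 2 * N t'))%N.
    rewrite big_nat_cond [X in (_ <= X)%N]big_nat_cond.
    apply: leq_sum => tt /andP [/andP [h1 h2] _]; apply: hN => //; rewrite -ltnS.
  rewrite -big_distrr /= leq_mul2l /=; apply: leq_trans hT.
  rewrite -(big_mkord predT N) (@big_cat_nat _ _ _ j.+1 0 T.+1) //=; last by rewrite ltnS ltnW.
  exact: leq_addl.
rewrite big_distrr /=.
apply: (@leq_trans (\sum_(t < j.+1) 2 * Tot))%N.
  by apply: leq_sum => t _; apply: one; rewrite -ltnS.
by rewrite sum_nat_const card_ord mulnA [(j.+1 * 2)%N]mulnC.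
Qed.
Lemma core_bound (K : multigraph) (k : nat) (e : 'I_(ke K)) (j L : nat) :
  (0 < L)%N -> (0 < k)%N -> (2 * (j + L) * ((j + L) + 2 * ke K) <= k)%N ->
  (L * #|[set f : subdiv K k | valid_subdiv K k f && (snum K k f e <= j)%N]|
   <= 2 * j.+1 * #|[set f : subdiv K k | valid_subdiv K k f]|)%N.
Proof.
move=> L0 k0 hk.
set N := fun t => #|[set f : subdiv K k | valid_subdiv K k f && (snum K k f e == t)]|.
have NC : forall t, N t = (k`! * #|@Cs K k e t|)%N.
  by move=> t; rewrite /N (core_count K k e (fun x => x == t)).
have hs : forall t, (t < j + L)%N -> ((k - (j + L + 2 * ke K)) * N t <= k * N t.+1)%N.
  move=> t tT; rewrite !NC mulnCA [X in (_ <= X)%N]mulnCA leq_mul2l; apply/orP; right.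
  apply: leq_trans (step K k e t); rewrite leq_mul2r; apply/orP; right.
  lia.
have ch := @chain N _ _ _ k0 hk hs.
have -> : L = ((j + L) - j)%N by rewrite addKn.
apply: (@ratio N) => //.
- by rewrite -[X in (X < _)%N]addn0 ltn_add2l.
- move=> t t' tj jt t'T.
  have -> : t' = (t + (t' - t))%N by rewrite subnKC //; lia.
  apply: ch; lia.
- by rewrite card_split.
- rewrite -card_split; apply: subset_leq_card; apply/fintype.subsetP => f.
  by rewrite !inE => /andP [].
Qed.
Import numFieldNormedType.Exports.
Local Open Scope classical_set_scope.
Local Open Scope ring_scope.

Theorem mainTheorem14 (R : realType) (K : nat -> multigraph) (k : nat -> nat)
    (e : forall n, 'I_(ke (K n))) :
  (forall n, is_kernel (K n)) ->
  (forall eps : R, 0 < eps ->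
     \forall n \near \oo, ((ke (K n))%:R <= eps * (k n)%:R)) ->
  forall j : nat, (fun n => core_prob R (K n) (k n) (e n) j) @ \oo --> (0 : R).
Proof.
move=> _ hm j.
apply/cvgrPdist_le => eps eps0.
set L := (Num.Def.archi_bound ((2 * j.+1)%:R / eps : R)).+1.
have hL : (2 * j.+1)%:R <= eps * L%:R :> R.
  have h0 : (0 : R) <= (2 * j.+1)%:R / eps by rewrite divr_ge0 // ltW.
  have /ltW h := archi_boundP h0.
  rewrite -ler_pdivrMl // mulrC; apply: (le_trans h).
  by rewrite ler_nat /L leqnSn.
have L0 : (0 < L)%N by [].
set T := (j + L)%N.
have T0 : (0 < T)%N by rewrite /T addn_gt0 L0 orbT.
have e0 : (0 : R) < ((8 * T * T)%:R)^-1 by rewrite invr_gt0 ltr0n !muln_gt0 T0.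
apply: filterS (hm _ e0) => n hn.
have hk : (ke (K n) * (8 * T * T) <= k n)%N.
  rewrite -(ler_nat R) natrM -ler_pdivlMr ?ltr0n ?muln_gt0 ?T0 //.
  by rewrite mulrC.
have m0 : (0 < ke (K n))%N by case: (e n) => i /= hi; lia.
have k0 : (0 < k n)%N by nia.
have hk2 : (2 * (j + L) * ((j + L) + 2 * ke (K n)) <= k n)%N.
  rewrite -/T; nia.
have cb := @core_bound (K n) (k n) (e n) j L L0 k0 hk2.
rewrite /core_prob sub0r normrN.
set B := #|_| in cb *; set Tt := #|_| in cb *.
rewrite ger0_norm ?divr_ge0 //.
have [->|Tt0] := eqVneq Tt 0%N; first by rewrite invr0 mulr0 ltW.
rewrite ler_pdivrMr ?ltr0n ?lt0n //.
have hB : L%:R * B%:R <= (2 * j.+1)%:R * Tt%:R :> R by rewrite -!natrM ler_nat.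
rewrite -(@ler_pM2l _ (L%:R)) ?ltr0n //.
apply: (le_trans hB).
rewrite mulrA [L%:R * eps]mulrC.
by apply: ler_wpM2r.
Qed.
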